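(* For each $u\in(0,1)$, $Q(u)=G(u)$ if and only if $S(u)=G(u)$.
   Context: Let $\mu,\nu$ be probability measures on $\mathbb R$ with finite first moments and $\mu\le_{cx}\nu$. Put $P_\eta(k)=\int(k-x)^+\eta(dx)$, $D=P_\nu-P_\mu$, and assume $\{k:D(k)>0\}$ is an interval. Let $G$ be any quantile function of $\mu$. For $u\in(0,1)$ let $\mu_u(A)=\mu(A\cap(-\infty,G(u)))+\big(u-\mu((-\infty,G(u)))\big)\delta_{G(u)}(A)$ and $\mathcal E_u=P_\nu-P_{\mu_u}$. $f^c$ is the largest convex minorant of $f$; $X^f(y)=\sup\{x\le y: f^c(x)=f(x)\}$, $Z^f(y)=\inf\{z\ge y: f^c(z)=f(z)\}$. Define $Q(u)=X^{\mathcal E_u}(G(u))$ and $S(u)=Z^{\mathcal E_u}(G(u))$. *)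

(* Defs.v *)
From HB Require Import structures.
From mathcomp Require Import all_boot all_order all_algebra.
From mathcomp Require Import all_classical all_reals all_analysis.
Set Implicit Arguments. Unset Strict Implicit. Unset Printing Implicit Defensive.
Import Order.TTheory GRing.Theory Num.Theory.
Import numFieldNormedType.Exports.
Local Open Scope classical_set_scope.
Local Open Scope ring_scope.

Section Defs.
Context {R : realType}.

Definition convex_fun (f : R -> R) : Prop :=
  forall x y t, 0 <= t <= 1 -> f (t * x + (1 - t) * y) <= t * f x + (1 - t) * f y.

Definition finite_first_moment (mu : probability R R) : Prop :=
  mu.-integrable setT (fun x => x%:E).

Definition cx_le (mu nu : probability R R) : Prop :=
  forall f : R -> R, convex_fun f ->
    (\int[mu]_x (f x)%:E <= \int[nu]_x (f x)%:E)%E.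

Definition Pput (eta : probability R R) (k : R) : R :=
  fine (\int[eta]_x (Num.max (k - x) 0)%:E).

Definition Dfun (mu nu : probability R R) (k : R) : R := Pput nu k - Pput mu k.

Definition is_quantile (mu : probability R R) (G : R -> R) : Prop :=
  forall u, 0 < u < 1 ->
    (mu `]-oo, G u[%classic <= u%:E <= mu `]-oo, G u]%classic)%E.

(* P_{mu_u}(k), where mu_u = mu|_(-oo,G u) + (u - mu((-oo,G u))) delta_{G u} *)
Definition Pput_u (mu : probability R R) (G : R -> R) (u k : R) : R :=
  fine (\int[mu]_(x in `]-oo, G u[%classic) (Num.max (k - x) 0)%:E
        + (u%:E - mu `]-oo, G u[%classic) * (Num.max (k - G u) 0)%:E)%E.

Definition Efun (mu nu : probability R R) (G : R -> R) (u : R) (k : R) : R :=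
  Pput nu k - Pput_u mu G u k.

Definition lcm (f : R -> R) (x : R) : R :=
  sup [set g x | g in [set g : R -> R | convex_fun g /\ forall y, g y <= f y]].

(* X^f(y) = sup{x <= y : f^c(x) = f(x)},  Z^f(y) = inf{z >= y : f^c(z) = f(z)}
   (in the extended reals; sup of empty = -oo, inf of empty = +oo) *)
Definition Xf (f : R -> R) (y : R) : \bar R :=
  ereal_sup [set x%:E | x in [set x | x <= y /\ lcm f x = f x]].
Definition Zf (f : R -> R) (y : R) : \bar R :=
  ereal_inf [set z%:E | z in [set z | y <= z /\ lcm f z = f z]].

Definition Qfun (mu nu : probability R R) (G : R -> R) (u : R) : \bar R :=
  Xf (Efun mu nu G u) (G u).
Definition Sfun (mu nu : probability R R) (G : R -> R) (u : R) : \bar R :=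
  Zf (Efun mu nu G u) (G u).

End Defs.

(* Main.v *)
Require Import Defs.
From HB Require Import structures.
From mathcomp Require Import all_boot all_order all_algebra.
From mathcomp Require Import all_classical all_reals all_analysis.
From mathcomp Require Import ring lra.
Import Order.TTheory GRing.Theory Num.Theory.
Import measurable_realfun.
Local Open Scope classical_set_scope.
Local Open Scope ring_scope.

Section S.
Variable R : realType.
Implicit Types (mu : probability R R).

Lemma meas_h (D : set R) (k : R) : measurable D ->
  measurable_fun D (fun x : R => Num.max (k - x) 0).
Proof.
move=> mD.
apply: (@measurable_realfun.measurable_maxr _ _ _ D (fun x => k - x) (cst 0)).
  by apply: (@measurable_funB _ _ _ D (cst k) id) => //; apply: measurable_id.
exact: measurable_cst.
Qed.

Lemma int_h mu (D : set R) (k : R) : measurable D -> finite_first_moment mu ->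
  mu.-integrable D (EFin \o (fun x : R => Num.max (k - x) 0)).
Proof.
move=> mD hm.
apply: (@le_integrable _ _ _ _ D mD _ (EFin \o (fun x => k - x))).
- by apply/measurable_realfun.measurable_EFinP; exact: meas_h.
- move=> x _ /=; rewrite lee_fin.
  case: (lerP (k - x) 0) => h.
  + by rewrite normr0.
  + by [].
- have -> : (EFin \o (fun x => k - x)) = (fun x => (EFin \o cst k) x - (x%:E))%E.
    by apply/funext => x.
  apply: integrableB => //.
    exact: finite_measure_integrable_cst.
  exact: (integrableS measurableT mD (subsetT D) hm).
Qed.

Lemma lip_int mu (D : set R) (k k' : R) : measurable D -> finite_first_moment mu ->
  `|Rintegral mu D (fun x => Num.max (k - x) 0) - Rintegral mu D (fun x => Num.max (k' - x) 0)| <= `|k - k'|.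
Proof.
move=> mD hm.
have i1 := @int_h mu D k mD hm; have i2 := @int_h mu D k' mD hm.
have iB : mu.-integrable D (EFin \o (fun x => Num.max (k - x) 0 - Num.max (k' - x) 0)).
  have -> : (EFin \o (fun x => Num.max (k - x) 0 - Num.max (k' - x) 0)) =
     (fun x => (EFin \o (fun x => Num.max (k - x) 0)%R) x - (EFin \o (fun x => Num.max (k' - x) 0)%R) x)%E.
    by apply/funext => x.
  exact: integrableB.
rewrite -RintegralB //.
apply: le_trans (le_normr_Rintegral mD iB) _.
have iA : mu.-integrable D (EFin \o (fun x => `|Num.max (k - x) 0 - Num.max (k' - x) 0|)).
  exact: integrable_norm.
apply: le_trans (@le_Rintegral _ _ _ mu D _ (cst `|k - k'|) mD iA _ _) _.
- exact: finite_measure_integrable_cst.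
- move=> x _ /=.
  have hk : `|k - k'| = Num.max (k - k') (k' - k).
    case: (lerP 0 (k - k')) => h; [rewrite (ger0_norm h) | rewrite (ltr0_norm h)].
      by rewrite max_l //; lra.
    by rewrite max_r; lra.
  rewrite hk le_max !ler_norml.
  case: (lerP (k-x) 0) => h1; case: (lerP (k'-x) 0) => h2; case: (lerP 0 (k - k')) => h3.
  all: try (apply/orP; left; apply/andP; split; lra).
  all: try (apply/orP; right; apply/andP; split; lra).

have -> : (\int[mu]_(x in D) cst `|k - k'| x) = `|k - k'| * fine (mu D) by exact: Rintegral_cst.
have h0 : 0 <= fine (mu D) by apply: fine_ge0.
have h1 : fine (mu D) <= 1.
  have := probability_le1 mu mD.
  rewrite -lee_fin fineK ?fin_num_measure //.
rewrite -{2}(mulr1 `|k - k'|); apply: ler_wpM2l => //.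
Qed.

Lemma Pput_lip mu k k' : finite_first_moment mu ->
  `|Pput mu k - Pput mu k'| <= `|k - k'|.
Proof. move=> hm; exact: (@lip_int mu setT k k' measurableT hm). Qed.

Lemma maxlip (a b c : R) : `|Num.max (a - c) 0 - Num.max (b - c) 0| <= `|a - b|.
Proof.
have hk : `|a - b| = Num.max (a - b) (b - a).
  case: (lerP 0 (a - b)) => h; [rewrite (ger0_norm h) | rewrite (ltr0_norm h)].
    by rewrite max_l //; lra.
  by rewrite max_r; lra.
rewrite hk le_max !ler_norml.
case: (lerP (a-c) 0) => h1; case: (lerP (b-c) 0) => h2; case: (lerP 0 (a - b)) => h3.
all: try (apply/orP; left; apply/andP; split; lra).
all: try (apply/orP; right; apply/andP; split; lra).
Qed.

Lemma Pput_u_eq mu G u k : finite_first_moment mu ->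
  Pput_u mu G u k = Rintegral mu `]-oo, G u[%classic (fun x => Num.max (k - x) 0)
     + (u - fine (mu `]-oo, G u[%classic)) * Num.max (k - G u) 0.
Proof.
move=> hm.
have mD : measurable `]-oo, G u[%classic by [].
have fI := integrable_fin_num mD (@int_h mu _ k mD hm).
have fD : mu `]-oo, G u[%classic \is a fin_num by rewrite fin_num_measure.
rewrite /Pput_u /Rintegral.
rewrite -(fineK fI) -(fineK fD) -EFinB -EFinM -EFinD /=.
by [].
Qed.

Lemma Pput_u_lip mu G u k k' : finite_first_moment mu -> 0 < u < 1 ->
  `|Pput_u mu G u k - Pput_u mu G u k'| <= 2 * `|k - k'|.
Proof.
move=> hm hu.
have mD : measurable `]-oo, G u[%classic by [].
rewrite !Pput_u_eq //.
set c := u - _.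
have hc : `|c| <= 1.
  have h0 : 0 <= fine (mu `]-oo, G u[%classic) by apply: fine_ge0.
  have h1 : fine (mu `]-oo, G u[%classic) <= 1.
    have := probability_le1 mu mD.
    by rewrite -lee_fin fineK ?fin_num_measure.
  rewrite ler_norml /c; apply/andP; split; lra.
have e1 := @lip_int mu _ k k' mD hm.
have e2 := maxlip k k' (G u).
have e3 : `|c * Num.max (k - G u) 0 - c * Num.max (k' - G u) 0| <= `|k - k'|.
  rewrite -mulrBr normrM.
  rewrite -[X in _ <= X]mul1r; apply: ler_pM => //.
set A := Rintegral _ _ _ in e1 *; set B := Rintegral _ _ _ in e1 *.
set P := c * _ in e3 *; set Q := c * _ in e3 *.
have -> : A + P - (B + Q) = (A - B) + (P - Q) by ring.
apply: le_trans (ler_normD _ _) _.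
lra.
Qed.

Lemma Efun_lip mu nu G u k k' : finite_first_moment mu -> finite_first_moment nu -> 0 < u < 1 ->
  `|Efun mu nu G u k - Efun mu nu G u k'| <= 3 * `|k - k'|.
Proof.
move=> hm hn hu.
have e1 := @Pput_lip nu k k' hn.
have e2 := @Pput_u_lip mu G u k k' hm hu.
rewrite /Efun.
set A := Pput nu k in e1 *; set B := Pput nu k' in e1 *.
set P := Pput_u _ _ _ k in e2 *; set Q := Pput_u _ _ _ k' in e2 *.
have -> : A - P - (B - Q) = (A - B) - (P - Q) by ring.
apply: le_trans (ler_normB _ _) _.
lra.
Qed.

Definition Mset (f : R -> R) := [set g : R -> R | convex_fun g /\ forall y, g y <= f y].

Lemma lcm_empty (f : R -> R) (z : R) : ~ (Mset f !=set0)%classic -> Defs.lcm f z = 0.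
Proof.
move=> hne; rewrite /Defs.lcm.
rewrite (_ : [set g z | g in _] = set0) ?sup0 //.
apply/seteqP; split => // x [g Mg _]; apply: hne; by exists g.
Qed.

Lemma lcm_hub (f : R -> R) (z : R) : has_ubound [set g z | g in Mset f].
Proof. by exists (f z); move=> _ [h [_ hf] <-]. Qed.

Lemma lcm_le (f : R -> R) (z : R) : (Mset f !=set0)%classic -> Defs.lcm f z <= f z.
Proof.
move=> [g0 Mg0]; rewrite /Defs.lcm; apply: ge_sup.
  by exists (g0 z), g0.
by move=> _ [h [_ hf] <-].
Qed.

Lemma lcm_convex (f : R -> R) : convex_fun (Defs.lcm f).
Proof.
move=> x y t ht.
case: (pselect (Mset f !=set0)%classic) => hne; last first.
  by rewrite !lcm_empty // !mulr0 addr0.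
have [g0 Mg0] := hne.
have t0 : 0 <= t by case/andP: ht.
have t1 : 0 <= 1 - t by case/andP: ht => _ h; lra.
rewrite {1}/Defs.lcm; apply: ge_sup.
  by exists (g0 (t * x + (1 - t) * y)), g0.
move=> _ [g [cg gf] <-].
apply: le_trans (cg x y t ht) _.
apply: lerD; apply: ler_wpM2l => //; apply: ub_le_sup; try exact: lcm_hub;
  by exists g.
Qed.

Lemma core (f : R -> R) K y w :
  0 <= K -> (forall a b, `|f a - f b| <= K * `|a - b|) -> `|w - y| = 1 ->
  (forall del, 0 < del < 1 -> exists x d, [/\ Defs.lcm f x = f x, 0 <= d < del & x = (1-d)*y + d*w]) ->
  Defs.lcm f y = f y.
Proof.
move=> K0 hL hw hx.
set L := Defs.lcm f.
have cv := @lcm_convex f.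
set M := `|L y - L w|.
have M0 : 0 <= M by apply: normr_ge0.
have key : forall del, 0 < del < 1 -> f y <= L y + del * (M + K) /\
   (~ (Mset f !=set0)%classic -> L y <= f y + del * K).
  move=> del hd.
  have [x [d [hLx /andP[d0 dd] hxe]]] := hx del hd; subst x.
  have d1 : 0 <= 1 - d <= 1 by apply/andP; split; lra.
  have hxy : `|((1 - d) * y + d * w) - y| = d.
    have -> : ((1 - d) * y + d * w) - y = d * (w - y) by ring.
    by rewrite normrM hw mulr1 ger0_norm.
  have hf := hL ((1 - d) * y + d * w) y; rewrite hxy in hf.
  have hf' : f y <= f ((1 - d) * y + d * w) + K * d.
    move: hf; rewrite ler_norml => /andP[h1 h2]; lra.
  have hc := cv y w (1 - d) d1.
  rewrite (_ : 1 - (1 - d) = d) in hc; last by ring.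
  rewrite /L hLx in hc.
  have dM : d * (L w - L y) <= d * M.
    by apply: ler_wpM2l => //; rewrite /M -normrN opprB; apply: ler_norm.
  have dK : K * d <= del * K by rewrite mulrC; apply: ler_wpM2r => //; lra.
  have dMM : d * M <= del * M by apply: ler_wpM2r => //; lra.
  split.
    rewrite -/L in hc. lra.
  move=> hne.
  have hf2 : f ((1 - d) * y + d * w) <= f y + K * d.
    move: hf; rewrite ler_norml => /andP[h1 h2]; lra.
  rewrite /L (@lcm_empty f y hne) -(@lcm_empty f ((1 - d) * y + d * w) hne) hLx.
  lra.
apply/eqP; rewrite eq_le; apply/andP; split.
  case: (pselect (Mset f !=set0)%classic) => hne; first exact: lcm_le.
  apply/ler_addgt0Pr => e e0.
  pose del := Num.min (2^-1) (e / (K + 1)).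
  have del0 : 0 < del < 1.
    apply/andP; split; first by rewrite lt_min; apply/andP; split => //; apply: divr_gt0 => //; lra.
    by rewrite gt_min; apply/orP; left; lra.
  have [_ h] := key del del0.
  apply: le_trans (h hne) _; rewrite lerD2l.
  have : del <= e / (K + 1) by rewrite ge_min lexx orbT.
  rewrite ler_pdivlMr; last by lra.
  move=> hh; nra.
apply/ler_addgt0Pr => e e0.
pose del := Num.min (2^-1) (e / (M + K + 1)).
have del0 : 0 < del < 1.
  apply/andP; split; first by rewrite lt_min; apply/andP; split => //; apply: divr_gt0 => //; lra.
  by rewrite gt_min; apply/orP; left; lra.
have [h _] := key del del0.
apply: le_trans h _; rewrite lerD2l.
have : del <= e / (M + K + 1) by rewrite ge_min lexx orbT.
rewrite ler_pdivlMr; last by lra.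
move=> hh; nra.
Qed.

Lemma X_to (f : R -> R) K y :
  0 <= K -> (forall a b, `|f a - f b| <= K * `|a - b|) ->
  Xf f y = y%:E -> Defs.lcm f y = f y.
Proof.
move=> K0 hL hX.
apply: (@core f K y (y - 1) K0 hL).
  have -> : y - 1 - y = -1 by ring.
  by rewrite normrN normr1.
move=> del /andP[d0 d1].
have : ((y - del)%:E < Xf f y)%E by rewrite hX lte_fin; lra.
case/ereal_sup_gt => _ [x [xy hx] <-]; rewrite lte_fin => hlt.
exists x, (y - x); split => //.
  by apply/andP; split; lra.
ring.
Qed.

Lemma Z_to (f : R -> R) K y :
  0 <= K -> (forall a b, `|f a - f b| <= K * `|a - b|) ->
  Zf f y = y%:E -> Defs.lcm f y = f y.
Proof.
move=> K0 hL hX.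
apply: (@core f K y (y + 1) K0 hL).
  have -> : y + 1 - y = 1 by ring.
  by rewrite normr1.
move=> del /andP[d0 d1].
have : (Zf f y < (y + del)%:E)%E by rewrite hX lte_fin; lra.
case/ereal_inf_lt => _ [x [xy hx] <-]; rewrite lte_fin => hlt.
exists x, (x - y); split => //.
  by apply/andP; split; lra.
ring.
Qed.

Lemma to_X (f : R -> R) y : Defs.lcm f y = f y -> Xf f y = y%:E.
Proof.
move=> h; apply/eqP; rewrite eq_le; apply/andP; split.
  by apply: ge_ereal_sup => _ [x [xy _] <-]; rewrite lee_fin.
by apply: ereal_sup_ubound; exists y.
Qed.

Lemma to_Z (f : R -> R) y : Defs.lcm f y = f y -> Zf f y = y%:E.
Proof.
move=> h; apply/eqP; rewrite eq_le; apply/andP; split.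
  by apply: ereal_inf_lbound; exists y.
by apply: le_ereal_inf_tmp => _ [x [xy _] <-]; rewrite lee_fin.
Qed.

End S.

Theorem lemma4p1 (R : realType) (mu nu : probability R R) (G : R -> R) :
  finite_first_moment mu -> finite_first_moment nu ->
  cx_le mu nu ->
  is_interval [set k | 0 < Dfun mu nu k] ->
  is_quantile mu G ->
  forall u : R, 0 < u < 1 ->
    (Qfun mu nu G u = (G u)%:E <-> Sfun mu nu G u = (G u)%:E).
Proof.
move=> hm hn _ _ _ u hu.
have K0 : (0 : R) <= 3 by [].
have hL := fun a b => @Efun_lip R mu nu G u a b hm hn hu.
rewrite /Qfun /Sfun; split => h.
  by apply: to_Z; exact: (@X_to R _ 3 _ K0 hL h).
by apply: to_X; exact: (@Z_to R _ 3 _ K0 hL h).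
Qed.
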